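(* Let $0<q<1$, $n\in\mathbb{N}_0$, and let $x,y,r,f,g,v,w,u$ be complex parameters with $y\neq0$. Then \begin{align*} &\sum_{k=0}^{n}\frac{(q^{-n},x;q)_k\,q^k}{(q,y;q)_k}\;{}_3\Phi_2\left[\begin{matrix}r,f,g;\\ v,w;\end{matrix}\;q;\,uq^k\right]\\ &\qquad=\frac{x^n\left(\frac{y}{x};q\right)_n}{(y;q)_n}\sum_{k,j\geqq0}\frac{(r,f,g;q)_{k+j}}{(q;q)_j\,(v,w;q)_{k+j}}\,\frac{\left(\frac{q^{1-n}}{y},\frac{qx}{y};q\right)_k}{\left(\frac{xq^{1-n}}{y},q;q\right)_k}\,u^{k+j}\left(\frac{q}{y}\right)^j. \end{align*}
   Context: Throughout $0<q<1$. For complex $\alpha$: $(\alpha;q)_0=1$, $(\alpha;q)_n=\prod_{k=0}^{n-1}(1-\alpha q^k)$, and $(\alpha_1,\dots,\alpha_m;q)_n=(\alpha_1;q)_n\cdots(\alpha_m;q)_n$. The basic hypergeometric series is ${}_{3}\Phi_{2}\left[\begin{matrix}a_1,a_2,a_3;\\ b_1,b_2;\end{matrix}\,q;z\right]=\sum_{n=0}^\infty\frac{(a_1,a_2,a_3;q)_n}{(b_1,b_2;q)_n}\frac{z^n}{(q;q)_n}$. *)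

(* Defs.v *)
From Stdlib Require Import Reals.
From Coquelicot Require Import Coquelicot.
Open Scope C_scope.

Fixpoint qpoch (a q : C) (n : nat) : C :=
  match n with
  | O => RtoC 1
  | S m => qpoch a q m * (RtoC 1 - a * Cpow q m)
  end.

(* sum of a complex series, computed componentwise with Coquelicot's Series
   (meaningful when the series converges) *)
Definition csum (a : nat -> C) : C :=
  (Series (fun n => fst (a n)), Series (fun n => snd (a n))).

Definition phi32_term (a1 a2 a3 b1 b2 q z : C) (n : nat) : C :=
  qpoch a1 q n * qpoch a2 q n * qpoch a3 q n
  / (qpoch b1 q n * qpoch b2 q n) * Cpow z n / qpoch q q n.

Definition phi32 (a1 a2 a3 b1 b2 q z : C) : C :=
  csum (phi32_term a1 a2 a3 b1 b2 q z).

Fixpoint csum_fin (a : nat -> C) (n : nat) : C :=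
  match n with
  | O => a O
  | S m => csum_fin a m + a (S m)
  end.

(* Main.v *)
Require Import Defs.
From Stdlib Require Import Reals Lia Lra Arith.
From Coquelicot Require Import Coquelicot.
Open Scope C_scope.

Fixpoint sm (a : nat -> C) (n : nat) : C :=
  match n with O => 0 | S m => sm a m + a m end.

Lemma sm_ext a b n : (forall k, (k < n)%nat -> a k = b k) -> sm a n = sm b n.
Proof. induction n; simpl; intros H; auto. rewrite IHn, H; auto. Qed.

Lemma sm_plus a b n : sm (fun k => a k + b k) n = sm a n + sm b n.
Proof. induction n; simpl. ring. rewrite IHn; ring. Qed.

Lemma sm_scal c a n : sm (fun k => c * a k) n = c * sm a n.
Proof. induction n; simpl. ring. rewrite IHn; ring. Qed.

Lemma sm_shift a n : sm a (S n) = a O + sm (fun k => a (S k)) n.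
Proof. induction n. simpl; ring. change (sm a (S (S n))) with (sm a (S n) + a (S n)).
 rewrite IHn. simpl. ring. Qed.

Lemma sm_comm (f : nat -> nat -> C) K M :
  sm (fun k => sm (fun i => f k i) M) K = sm (fun i => sm (fun k => f k i) K) M.
Proof. induction K; simpl.
 - induction M; simpl; auto. rewrite <- IHM; ring.
 - rewrite IHK. rewrite <- sm_plus. reflexivity. Qed.

Lemma sm_zero a n : (forall k, (k < n)%nat -> a k = 0) -> sm a n = 0.
Proof. induction n; simpl; intros H; auto. rewrite IHn, H; auto. ring. Qed.

Lemma csum_fin_sm a n : csum_fin a n = sm a (S n).
Proof. induction n. simpl. ring. simpl. rewrite IHn. reflexivity. Qed.

Lemma qp_S a Q k : qpoch a Q (S k) = qpoch a Q k * (1 - a * Cpow Q k).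
Proof. reflexivity. Qed.

Lemma qp_shift a Q k : qpoch a Q (S k) = (1 - a) * qpoch (a * Q) Q k.
Proof. induction k. simpl. ring.
 rewrite qp_S, IHk, qp_S. simpl. ring. Qed.

Lemma qp_prefix a Q m j : qpoch a Q m <> 0 -> (j <= m)%nat -> qpoch a Q j <> 0.
Proof. intros H Hj. induction Hj; auto. apply IHHj. rewrite qp_S in H.
 intro E; apply H; rewrite E; ring. Qed.

Lemma qp_last a Q m : qpoch a Q (S m) <> 0 -> 1 - a * Cpow Q m <> 0.
Proof. rewrite qp_S. intros H E; apply H; rewrite E; ring. Qed.

Lemma qpN_zero (Q : C) (n d : nat) : Q <> 0 -> qpoch (/ Cpow Q n) Q (S n + d) = 0.
Proof. intros HQ. induction d as [|d IHd].
 - rewrite Nat.add_0_r, qp_S. rewrite Cinv_l. ring. apply Cpow_nz; auto.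
 - replace (S n + S d)%nat with (S (S n + d))%nat by lia. rewrite qp_S, IHd. ring. Qed.

Definition Tm (Q : C) (n : nat) (x y : C) (k : nat) : C :=
  qpoch (/ Cpow Q n) Q k * qpoch x Q k * Cpow Q k / (qpoch Q Q k * qpoch y Q k).
Definition Pn (Q x y : C) (n : nat) : C :=
  Cpow x n * qpoch (y / x) Q n / qpoch y Q n.

Lemma Tm_step (Q : C) (n k : nat) (x y : C) :
  Q <> 0 -> (forall j, qpoch Q Q j <> 0) -> qpoch y Q (S k) <> 0 ->
  Tm Q (S n) x y (S k) = Tm Q n x y (S k) - (/ Cpow Q n) * (1 - x) / (1 - y) * Tm Q n (x * Q) (y * Q) k.
Proof.
  intros HQ HQQ Hy.
  assert (Hy1 : 1 - y <> 0). { intro E; apply Hy. rewrite qp_shift, E; ring. }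
  assert (HyQ : qpoch (y * Q) Q k <> 0). { intro E; apply Hy. rewrite qp_shift, E; ring. }
  assert (HQk : 1 - Q * Cpow Q k <> 0). { apply (qp_last Q Q k). apply HQQ. }
  assert (HQn : Cpow Q n <> 0) by (apply Cpow_nz; auto).
  unfold Tm.
  rewrite (qp_shift (/ Cpow Q (S n))).
  replace (/ Cpow Q (S n) * Q) with (/ Cpow Q n) by (simpl; field; auto).
  rewrite (qp_S (/ Cpow Q n)), (qp_shift x), (qp_shift y), (qp_S Q Q k).
  simpl Cpow. field. repeat split; auto.
Qed.

Lemma qCV (Q : C) (n : nat) : Q <> 0 -> (forall j, qpoch Q Q j <> 0) ->
  forall x y : C, x <> 0 -> qpoch y Q n <> 0 -> sm (Tm Q n x y) (S n) = Pn Q x y n.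
Proof.
  intros HQ HQQ. induction n as [|n IH]; intros x y Hx Hy.
  - simpl. unfold Tm, Pn. simpl. field.
  - assert (Hy1 : 1 - y <> 0). { intro E; apply Hy. rewrite qp_shift, E; ring. }
    assert (HyQ : qpoch (y * Q) Q n <> 0). { intro E; apply Hy. rewrite qp_shift, E; ring. }
    assert (Hyn : qpoch y Q n <> 0). { apply (qp_prefix y Q (S n)); auto. }
    assert (HyQn : 1 - y * Cpow Q n <> 0) by (apply qp_last; auto).
    assert (HQn : Cpow Q n <> 0) by (apply Cpow_nz; auto).
    rewrite sm_shift.
    rewrite (sm_ext _ (fun k => Tm Q n x y (S k) - (/ Cpow Q n) * (1 - x) / (1 - y) * Tm Q n (x * Q) (y * Q) k)).
    2:{ intros k Hk. apply Tm_step; auto. apply (qp_prefix y Q (S n)); auto; lia. }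
    unfold Cminus at 1. rewrite sm_plus.
    rewrite (sm_ext (fun k => - (/ Cpow Q n * (1 - x) / (1 - y) * Tm Q n (x * Q) (y * Q) k))
               (fun k => (- (/ Cpow Q n * (1 - x) / (1 - y))) * Tm Q n (x * Q) (y * Q) k)).
    2:{ intros; ring. }
    rewrite sm_scal.
    assert (HxQ : x * Q <> 0).
    { apply Cmult_neq_0; auto. }
    rewrite (IH (x * Q) (y * Q)); auto.
    assert (E1 : sm (fun k => Tm Q n x y (S k)) (S n) = Pn Q x y n - Tm Q n x y O).
    { rewrite <- (IH x y); auto. rewrite (sm_shift (Tm Q n x y)). simpl sm at 1.
      replace (Tm Q n x y (S n)) with (RtoC 0). ring.
      unfold Tm. replace (S n) with (S n + 0)%nat by lia. rewrite qpN_zero; auto. unfold Cdiv. ring. }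
    rewrite E1.
    unfold Tm, Pn. simpl qpoch at 1 2 3 4 5 6.
    replace (y * Q / (x * Q)) with (y / x) by (field; auto).
    rewrite Cpow_mult_l.
    assert (Heq : (1 - y) * qpoch (y * Q) Q n = qpoch y Q n * (1 - y * Cpow Q n)).
    { rewrite <- qp_shift. reflexivity. }
    replace (qpoch (y * Q) Q n) with (qpoch y Q n * (1 - y * Cpow Q n) / (1 - y))
      by (rewrite <- Heq; field; auto).
    simpl. field. repeat split; auto.
Qed.

Fixpoint pw (w Q : C) (i : nat) (z : C) : C :=
  match i with O => 1 | S j => pw w Q j z * (z - w * Cpow Q j) end.

Fixpoint Num (Q x y : C) (n : nat) : C :=
  match n with O => 1 | S m => Num Q x y m * (x - y * Cpow Q m) end.

Lemma Num_eq (Q x y : C) n : x <> 0 -> Cpow x n * qpoch (y / x) Q n = Num Q x y n.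
Proof. intros Hx. induction n. simpl; ring. simpl Num. rewrite <- IHn. rewrite qp_S.
 simpl Cpow. field. auto. Qed.

Lemma Num_shift (Q x y : C) n : Num Q (x * Q) y (S n) = (x * Q - y) * Cpow Q n * Num Q x y n.
Proof. induction n. simpl; ring. simpl Num in *. rewrite IHn. simpl Cpow. ring. Qed.

Lemma Pn_shift (Q x y : C) n : Q <> 0 -> x <> 0 -> y <> 0 ->
  Pn Q (x * Q) y n * (1 - x * (Q / Cpow Q n) / y) = Pn Q x y n * (1 - Q * x / y).
Proof. intros HQ Hx Hy. unfold Pn.
 assert (HxQ : x * Q <> 0) by (apply Cmult_neq_0; auto).
 assert (HQn : Cpow Q n <> 0) by (apply Cpow_nz; auto).
 rewrite !Num_eq; auto.
 pose proof (Num_shift Q x y n) as H. simpl Num in H.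
 set (iY := / qpoch y Q n). unfold Cdiv. fold iY.
 assert (E : Num Q (x * Q) y n * (1 - x * (Q * / Cpow Q n) * / y)
            = - (Num Q (x * Q) y n * (x * Q - y * Cpow Q n)) / (y * Cpow Q n)).
 { field. auto. }
 rewrite <- Cmult_assoc, (Cmult_comm iY), Cmult_assoc, E, H. field. auto.
Qed.

Lemma Tm_x (Q : C) n (x y : C) k : x <> 0 ->
  Tm Q n x y k * Cpow Q k = / x * Tm Q n x y k - / x * (1 - x) * Tm Q n (x * Q) y k.
Proof. intros Hx. unfold Tm, Cdiv.
 set (iD := / (qpoch Q Q k * qpoch y Q k)).
 assert (H : (1 - x) * qpoch (x * Q) Q k = qpoch x Q k * (1 - x * Cpow Q k)).
 { rewrite <- qp_shift. reflexivity. }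
 transitivity (/ x * (qpoch (/ Cpow Q n) Q k * qpoch x Q k * Cpow Q k * iD) -
   / x * (qpoch (/ Cpow Q n) Q k * ((1 - x) * qpoch (x * Q) Q k) * Cpow Q k * iD)).
 rewrite H. field. auto. ring.
Qed.

Definition Gs (Q : C) n (x y : C) m := sm (fun k => Tm Q n x y k * pw (Q / y) Q m (Cpow Q k)) (S n).
Definition Rm (Q : C) n (x y : C) m :=
  Pn Q x y n * qpoch ((Q / Cpow Q n) / y) Q m * qpoch (Q * x / y) Q m
  / qpoch (x * (Q / Cpow Q n) / y) Q m.

Lemma Gs_step (Q : C) n (x y : C) m : x <> 0 ->
  Gs Q n x y (S m) = / x * Gs Q n x y m - / x * (1 - x) * Gs Q n (x * Q) y m
     - (Q / y) * Cpow Q m * Gs Q n x y m.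
Proof. intros Hx. unfold Gs.
 rewrite (sm_ext _ (fun k => (/ x * (Tm Q n x y k * pw (Q / y) Q m (Cpow Q k))
    + (- (/ x * (1 - x))) * (Tm Q n (x * Q) y k * pw (Q / y) Q m (Cpow Q k)))
    + (- ((Q / y) * Cpow Q m)) * (Tm Q n x y k * pw (Q / y) Q m (Cpow Q k)))).
 - rewrite !sm_plus, !sm_scal. ring.
 - intros k _. simpl pw.
   transitivity ((Tm Q n x y k * Cpow Q k) * pw (Q / y) Q m (Cpow Q k)
     - (Q / y) * Cpow Q m * (Tm Q n x y k * pw (Q / y) Q m (Cpow Q k))). ring.
   rewrite Tm_x; auto. ring.
Qed.

Lemma II (Q : C) n (y : C) : Q <> 0 -> (forall j, qpoch Q Q j <> 0) -> y <> 0 ->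
  qpoch y Q n <> 0 ->
  forall m (x : C), x <> 0 -> qpoch (x * (Q / Cpow Q n) / y) Q m <> 0 ->
  Gs Q n x y m = Rm Q n x y m.
Proof.
  intros HQ HQQ Hy Hyn m. induction m as [|m IH]; intros x Hx Hc.
  - unfold Gs, Rm. simpl pw. rewrite (sm_ext _ (Tm Q n x y)) by (intros; ring).
    rewrite qCV; auto. simpl. field. auto.
  - assert (HxQ : x * Q <> 0) by (apply Cmult_neq_0; auto).
    assert (Hcm : qpoch (x * (Q / Cpow Q n) / y) Q m <> 0) by (apply (qp_prefix _ _ (S m)); auto).
    assert (Hc1 : 1 - x * (Q / Cpow Q n) / y <> 0).
    { intro E; apply Hc. rewrite qp_shift, E. ring. }
    assert (HcQ : qpoch (x * (Q / Cpow Q n) / y * Q) Q m <> 0).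
    { intro E; apply Hc. rewrite qp_shift, E. ring. }
    assert (HcQ' : qpoch (x * Q * (Q / Cpow Q n) / y) Q m <> 0).
    { replace (x * Q * (Q / Cpow Q n) / y) with (x * (Q / Cpow Q n) / y * Q) by (field; split; auto; apply Cpow_nz; auto). auto. }
    rewrite Gs_step; auto. rewrite (IH x), (IH (x * Q)); auto.
    unfold Rm.
    replace (x * Q * (Q / Cpow Q n) / y) with (x * (Q / Cpow Q n) / y * Q) by (field; split; auto; apply Cpow_nz; auto).
    replace (Q * (x * Q) / y) with (Q * x / y * Q) by (field; auto).
    set (c := x * (Q / Cpow Q n) / y) in *.
    set (b := Q * x / y).
    set (a := Q / Cpow Q n / y).
    assert (HC : (1 - c) * qpoch (c * Q) Q m = qpoch c Q m * (1 - c * Cpow Q m)) by (rewrite <- qp_shift; reflexivity).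
    assert (HB : (1 - b) * qpoch (b * Q) Q m = qpoch b Q m * (1 - b * Cpow Q m)) by (rewrite <- qp_shift; reflexivity).
    assert (HP : Pn Q (x * Q) y n * (1 - c) = Pn Q x y n * (1 - b)) by (apply Pn_shift; auto).
    rewrite !qp_S.
    replace (Pn Q (x * Q) y n * qpoch a Q m * qpoch (b * Q) Q m / qpoch (c * Q) Q m)
      with (qpoch a Q m * (Pn Q (x * Q) y n * (1 - c)) * qpoch (b * Q) Q m / ((1 - c) * qpoch (c * Q) Q m))
      by (field; auto).
    rewrite HP, HC.
    replace (qpoch a Q m * (Pn Q x y n * (1 - b)) * qpoch (b * Q) Q m)
      with (qpoch a Q m * Pn Q x y n * ((1 - b) * qpoch (b * Q) Q m)) by ring.
    rewrite HB.
    assert (Hc2 : 1 - c * Cpow Q m <> 0) by (apply qp_last; auto).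
    assert (HQn : Cpow Q n <> 0) by (apply Cpow_nz; auto).
    assert (Hd : Cpow Q n * y - x * Q * Cpow Q m <> 0).
    { intro E; apply Hc2. unfold c.
      replace (1 - x * (Q / Cpow Q n) / y * Cpow Q m) with ((Cpow Q n * y - x * Q * Cpow Q m) / (Cpow Q n * y))
        by (field; auto). rewrite E. unfold Cdiv. ring. }
    unfold c, b, a. field. repeat split; auto.
Qed.

Fixpoint qb (Q : C) (m i : nat) : C :=
  match m, i with
  | _, O => 1
  | O, S _ => 0
  | S m', S i' => qb Q m' i' + Cpow Q (S i') * qb Q m' (S i')
  end.

Lemma qb_zero (Q : C) m i : (m < i)%nat -> qb Q m i = 0.
Proof. revert i; induction m; intros i Hi; destruct i; try lia; simpl; auto.
 rewrite !IHm by lia. ring. Qed.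

Lemma qb_0 (Q : C) m : qb Q m 0 = 1.
Proof. destruct m; reflexivity. Qed.

Lemma newton (Q w z : C) m :
  Cpow z m = sm (fun i => qb Q m i * Cpow w (m - i) * pw w Q i z) (S m).
Proof.
  induction m.
  - simpl. ring.
  - change (Cpow z (S m)) with (z * Cpow z m). rewrite IHm.
    rewrite <- sm_scal.
    rewrite (sm_ext _ (fun i => qb Q m i * Cpow w (m - i) * pw w Q (S i) z
                  + qb Q m i * Cpow w (S m - i) * Cpow Q i * pw w Q i z)).
    2:{ intros i Hi. rewrite Nat.sub_succ_l by lia. simpl pw. simpl Cpow. ring. }
    rewrite sm_plus.
    rewrite (sm_shift (fun i => qb Q (S m) i * Cpow w (S m - i) * pw w Q i z)).
    simpl (qb Q (S m) 0). simpl (pw w Q 0 z).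
    rewrite (sm_ext (fun k => qb Q (S m) (S k) * Cpow w (S m - S k) * pw w Q (S k) z)
       (fun k => qb Q m k * Cpow w (m - k) * pw w Q (S k) z
         + Cpow Q (S k) * qb Q m (S k) * Cpow w (m - k) * pw w Q (S k) z)).
    2:{ intros k _. simpl qb. simpl Nat.sub. simpl Cpow. ring. }
    rewrite sm_plus.
    rewrite (sm_shift (fun i => qb Q m i * Cpow w (S m - i) * Cpow Q i * pw w Q i z)).
    simpl (qb Q m 0). simpl (pw w Q 0 z). simpl (Cpow Q 0). rewrite Nat.sub_0_r.
    change (sm (fun k => Cpow Q (S k) * qb Q m (S k) * Cpow w (m - k) * pw w Q (S k) z) (S m))
      with (sm (fun k => Cpow Q (S k) * qb Q m (S k) * Cpow w (m - k) * pw w Q (S k) z) m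
            + Cpow Q (S m) * qb Q m (S m) * Cpow w (m - m) * pw w Q (S m) z).
    rewrite (qb_zero Q m (S m)) by lia.
    rewrite (sm_ext (fun k => qb Q m (S k) * Cpow w (S m - S k) * Cpow Q (S k) * pw w Q (S k) z)
       (fun k => Cpow Q (S k) * qb Q m (S k) * Cpow w (m - k) * pw w Q (S k) z)).
    2:{ intros k _. simpl Nat.sub. ring. }
    rewrite qb_0. simpl Cpow. ring.
Qed.

Lemma qb_diag (Q : C) n : qb Q n n = 1.
Proof. induction n. reflexivity. simpl. rewrite IHn, qb_zero by lia. ring. Qed.

Lemma qb_fact (Q : C) : forall n i j, (i + j = n)%nat ->
  qb Q n i * qpoch Q Q i * qpoch Q Q j = qpoch Q Q n.
Proof.
  induction n; intros i j H.
  - assert (i = 0)%nat by lia. assert (j = 0)%nat by lia. subst. simpl. ring.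
  - destruct i.
    + simpl in H. subst j. simpl. ring.
    + simpl qb. destruct j.
      * assert (i = n) by lia. subst i. rewrite (qb_zero Q n (S n)) by lia.
        rewrite qb_diag. simpl. ring.
      * rewrite Cmult_plus_distr_r, Cmult_plus_distr_r.
        rewrite (qp_S Q Q i).
        transitivity (qb Q n i * qpoch Q Q i * qpoch Q Q (S j) * (1 - Q * Cpow Q i)
          + Cpow Q (S i) * (qb Q n (S i) * qpoch Q Q (S i) * qpoch Q Q j) * (1 - Q * Cpow Q j)).
        { rewrite (qp_S Q Q j), (qp_S Q Q i). simpl Cpow. ring. }
        rewrite (IHn i (S j)) by lia. rewrite (IHn (S i) j) by lia.
        rewrite qp_S. replace n with (i + S j)%nat by lia.
        rewrite Cpow_add_r. simpl Cpow. ring.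
Qed.

Definition Bk (Q : C) n (x y : C) (i : nat) : C :=
  qpoch ((Q / Cpow Q n) / y) Q i * qpoch (Q * x / y) Q i
  / (qpoch (x * (Q / Cpow Q n) / y) Q i * qpoch Q Q i).

Lemma finite_id (Q : C) n (x y : C) m : Q <> 0 -> (forall j, qpoch Q Q j <> 0) -> y <> 0 ->
  qpoch y Q n <> 0 -> x <> 0 -> (forall j, qpoch (x * (Q / Cpow Q n) / y) Q j <> 0) ->
  sm (fun k => Tm Q n x y k * Cpow (Cpow Q k) m) (S n) / qpoch Q Q m
  = Pn Q x y n * sm (fun i => Bk Q n x y i * Cpow (Q / y) (m - i) / qpoch Q Q (m - i)) (S m).
Proof.
  intros HQ HQQ Hy Hyn Hx Hc.
  rewrite (sm_ext _ (fun k => sm (fun i => Tm Q n x y k * (qb Q m i * Cpow (Q / y) (m - i) * pw (Q / y) Q i (Cpow Q k))) (S m))).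
  2:{ intros k _. rewrite (newton Q (Q / y) (Cpow Q k) m). rewrite <- sm_scal. reflexivity. }
  rewrite sm_comm.
  rewrite (sm_ext _ (fun i => (qb Q m i * Cpow (Q / y) (m - i)) * Gs Q n x y i)).
  2:{ intros i _. unfold Gs. rewrite <- sm_scal. apply sm_ext. intros; ring. }
  unfold Cdiv at 1. rewrite Cmult_comm, <- sm_scal, <- sm_scal.
  apply sm_ext. intros i Hi.
  rewrite II; auto.
  pose proof (qb_fact Q m i (m - i) ltac:(lia)) as HF.
  assert (Hi1 := HQQ i). assert (Hi2 := HQQ (m - i)%nat). assert (Hi3 := Hc i).
  replace (qb Q m i) with (qpoch Q Q m / (qpoch Q Q i * qpoch Q Q (m - i))).
  2:{ rewrite <- HF. field. auto. }
  unfold Rm, Bk. field. repeat split; auto.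
Qed.

Fixpoint smR (a : nat -> R) (n : nat) : R :=
  match n with O => 0%R | S m => (smR a m + a m)%R end.

Lemma smR_le (a b : nat -> R) n : (forall k, (k < n)%nat -> a k <= b k)%R -> (smR a n <= smR b n)%R.
Proof. induction n; simpl; intros H. lra. assert (H1 := H n ltac:(lia)).
 assert (H2 : (smR a n <= smR b n)%R) by (apply IHn; intros; apply H; lia). lra. Qed.

Lemma smR_nonneg (a : nat -> R) n : (forall k, 0 <= a k)%R -> (0 <= smR a n)%R.
Proof. intros H; induction n; simpl. lra. specialize (H n). lra. Qed.

Lemma smR_scal (c : R) (a : nat -> R) n : smR (fun k => c * a k)%R n = (c * smR a n)%R.
Proof. induction n; simpl. ring. rewrite IHn; ring. Qed.

Lemma Cmod_sm (a : nat -> C) n : (Cmod (sm a n) <= smR (fun k => Cmod (a k)) n)%R.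
Proof. induction n; simpl. rewrite Cmod_0; lra.
 eapply Rle_trans. apply Cmod_triangle. lra. Qed.

Lemma geo_sum (b : R) n : (0 <= b < 1)%R -> (smR (fun j => b ^ j) n <= / (1 - b))%R.
Proof. intros Hb.
 assert (E : (smR (fun j => b ^ j) n * (1 - b) = 1 - b ^ n)%R).
 { induction n; simpl. ring. rewrite Rmult_plus_distr_r, IHn. ring. }
 assert (0 <= b ^ n)%R by (apply pow_le; lra).
 apply (Rmult_le_reg_r (1 - b)). lra. rewrite E, Rinv_l; lra. Qed.

Lemma sm_split (a : nat -> C) M n : sm a (M + n) = sm a M + sm (fun j => a (M + j)%nat) n.
Proof. induction n. rewrite Nat.add_0_r. simpl. ring.
 rewrite Nat.add_succ_r. simpl. rewrite IHn. ring. Qed.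

Lemma sum_n_sm (a : nat -> C) n : sum_n a n = sm a (S n).
Proof. induction n. rewrite sum_O. simpl. ring. rewrite sum_Sn, IHn. reflexivity. Qed.

Lemma sum_n_smR (a : nat -> R) n : sum_n a n = smR a (S n).
Proof. induction n. rewrite sum_O. simpl. ring. rewrite sum_Sn, IHn. reflexivity. Qed.

Lemma sum_f_smR (a : nat -> R) n : sum_f_R0 a n = smR a (S n).
Proof. induction n. simpl. ring. simpl. rewrite IHn. reflexivity. Qed.

Definition cv (a : nat -> C) (l : C) : Prop :=
  forall eps : R, (0 < eps)%R -> exists N, forall n, (N <= n)%nat -> (Cmod (sm a n - l) < eps)%R.

Lemma is_series_cv (a : nat -> C) l : is_series a l -> cv a l.
Proof. intros H0 eps Heps. unfold is_series in H0. pose proof (proj1 (@filterlim_locally_ball_norm C_AbsRing nat C_NormedModule eventually _ (sum_n a) l) H0) as H.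
 destruct (H (mkposreal eps Heps)) as [N HN].
 exists (S N). intros n Hn. destruct n. lia.
 specialize (HN n ltac:(lia)). unfold ball_norm in HN. change (Cmod (sum_n a n - l) < eps)%R in HN.
 rewrite sum_n_sm in HN. exact HN. Qed.

Lemma cv_csum (a : nat -> C) l : cv a l -> csum a = l.
Proof. intros H. unfold csum. destruct l as [l1 l2].
 assert (E1 : Series (fun n => fst (a n)) = l1).
 { apply is_series_unique. unfold is_series. apply filterlim_locally_ball_norm. intros eps.
   destruct (H eps (cond_pos eps)) as [N HN]. exists N. intros n Hn.
   unfold ball_norm. rewrite sum_n_smR.
   assert (Hs : smR (fun n => fst (a n)) (S n) = fst (sm a (S n))).
   { clear. induction (S n); simpl; auto. rewrite IHn0. reflexivity. }
   rewrite Hs. specialize (HN (S n) ltac:(lia)).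
   eapply Rle_lt_trans; [|exact HN].
   eapply Rle_trans; [|apply Rmax_Cmod]. simpl. apply Rmax_l. }
 assert (E2 : Series (fun n => snd (a n)) = l2).
 { apply is_series_unique. unfold is_series. apply filterlim_locally_ball_norm. intros eps.
   destruct (H eps (cond_pos eps)) as [N HN]. exists N. intros n Hn.
   unfold ball_norm. rewrite sum_n_smR.
   assert (Hs : smR (fun n => snd (a n)) (S n) = snd (sm a (S n))).
   { clear. induction (S n); simpl; auto. rewrite IHn0. reflexivity. }
   rewrite Hs. specialize (HN (S n) ltac:(lia)).
   eapply Rle_lt_trans; [|exact HN].
   eapply Rle_trans; [|apply Rmax_Cmod]. simpl. apply Rmax_r. }
 rewrite E1, E2. reflexivity. Qed.

Lemma ex_cv (a : nat -> C) (b : nat -> R) :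
  (forall m, Cmod (a m) <= b m)%R -> ex_series b -> exists l, cv a l.
Proof. intros H Hb.
 assert (Ha : ex_series a).
 { apply (@ex_series_le C_AbsRing C_CompleteNormedModule a b); auto.
   all: try (intros n; change (Cmod (a n) <= b n)%R; auto). }
 destruct Ha as [l Hl]. exists l. apply is_series_cv. exact Hl. Qed.

Lemma ex_geo (M r : R) : (0 <= r < 1)%R -> ex_series (fun m => M * r ^ m)%R.
Proof. intros Hr. apply (ex_series_ext (fun m => scal M (r ^ m)%R)).
 intros; reflexivity. apply (@ex_series_scal R_AbsRing R_NormedModule). apply ex_series_geom. rewrite Rabs_pos_eq; lra. Qed.

Lemma cv_ext (a b : nat -> C) l : (forall m, a m = b m) -> cv a l -> cv b l.
Proof. intros E H eps He. destruct (H eps He) as [N HN]. exists N. intros n Hn.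
 rewrite <- (sm_ext a b n) by auto. auto. Qed.

Lemma cv_plus (a b : nat -> C) la lb : cv a la -> cv b lb -> cv (fun m => a m + b m) (la + lb).
Proof. intros Ha Hb eps He.
 destruct (Ha (eps/2)%R ltac:(lra)) as [N1 H1]. destruct (Hb (eps/2)%R ltac:(lra)) as [N2 H2].
 exists (Nat.max N1 N2). intros n Hn. rewrite sm_plus.
 specialize (H1 n ltac:(lia)). specialize (H2 n ltac:(lia)).
 replace (sm a n + sm b n - (la + lb)) with ((sm a n - la) + (sm b n - lb)) by ring.
 eapply Rle_lt_trans. apply Cmod_triangle. lra. Qed.

Lemma cv_scal (c : C) (a : nat -> C) l : cv a l -> cv (fun m => c * a m) (c * l).
Proof. intros Ha eps He.
 destruct (Ha (eps / (Cmod c + 1))%R) as [N HN].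
 { apply Rdiv_lt_0_compat; auto. pose proof (Cmod_ge_0 c). lra. }
 exists N. intros n Hn. rewrite sm_scal.
 replace (c * sm a n - c * l) with (c * (sm a n - l)) by ring. rewrite Cmod_mult.
 specialize (HN n Hn). pose proof (Cmod_ge_0 c). pose proof (Cmod_ge_0 (sm a n - l)).
 apply (Rle_lt_trans _ ((Cmod c + 1) * Cmod (sm a n - l))). nra.
 apply (Rmult_lt_compat_l (Cmod c + 1)) in HN; [|lra].
 replace ((Cmod c + 1) * (eps / (Cmod c + 1)))%R with eps in HN by (field; lra). exact HN. Qed.

Lemma cv_unique (a : nat -> C) l1 l2 : cv a l1 -> cv a l2 -> l1 = l2.
Proof. intros H1 H2.
 assert (Hz : Cmod (l1 - l2) = 0%R).
 { apply Rle_antisym; [|apply Cmod_ge_0].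
   apply Rnot_lt_le. intros Hp.
   destruct (H1 (Cmod (l1 - l2) / 2)%R ltac:(lra)) as [N1 HN1].
   destruct (H2 (Cmod (l1 - l2) / 2)%R ltac:(lra)) as [N2 HN2].
   specialize (HN1 (Nat.max N1 N2) ltac:(lia)). specialize (HN2 (Nat.max N1 N2) ltac:(lia)).
   set (s := sm a (Nat.max N1 N2)) in *.
   assert (T : (Cmod (l1 - l2) <= Cmod (s - l2) + Cmod (-(s - l1)))%R).
   { replace (l1 - l2) with ((s - l2) + (- (s - l1))) by ring. apply Cmod_triangle. }
   rewrite Cmod_opp in T. lra. }
 apply Cmod_eq_0 in Hz. replace l1 with ((l1 - l2) + l2) by ring. rewrite Hz. ring. Qed.

Lemma cv_sm (f : nat -> nat -> C) (l : nat -> C) K :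
  (forall k, (k < K)%nat -> cv (f k) (l k)) ->
  cv (fun m => sm (fun k => f k m) K) (sm l K).
Proof. induction K; intros H.
 - intros eps He. exists O. intros n _. simpl.
   rewrite (sm_zero (fun _ => 0)) by auto. replace (0 - 0) with (RtoC 0) by ring. rewrite Cmod_0. lra.
 - simpl. apply cv_plus. apply IHK. intros; apply H; lia. apply H; lia. Qed.

Lemma cv_tail (a : nat -> C) l M : cv a l -> cv (fun j => a (M + j)%nat) (l - sm a M).
Proof. intros H eps He. destruct (H eps He) as [N HN]. exists N. intros n Hn.
 specialize (HN (M + n)%nat ltac:(lia)). rewrite sm_split in HN.
 replace (sm (fun j => a (M + j)%nat) n - (l - sm a M)) with (sm a M + sm (fun j => a (M + j)%nat) n - l) by ring.
 exact HN. Qed.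

Lemma cv_norm_le (a : nat -> C) l (S0 : R) : cv a l -> (forall n, Cmod (sm a n) <= S0)%R -> (Cmod l <= S0)%R.
Proof. intros H B. apply Rnot_lt_le. intros Hl.
 destruct (H (Cmod l - S0)%R ltac:(lra)) as [N HN]. specialize (HN N (le_n _)). specialize (B N).
 assert (T : (Cmod l <= Cmod (sm a N) + Cmod (-(sm a N - l)))%R).
 { replace l with (sm a N + (-(sm a N - l))) at 1 by ring. apply Cmod_triangle. }
 rewrite Cmod_opp in T. lra. Qed.

Fixpoint mx (f : nat -> R) (n : nat) : R :=
  match n with O => f O | S k => Rmax (mx f k) (f (S k)) end.

Lemma mx_ge (f : nat -> R) n i : (i <= n)%nat -> (f i <= mx f n)%R.
Proof. induction n; intros H. assert (i = 0)%nat by lia. subst. simpl. lra.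
 destruct (Nat.eq_dec i (S n)). subst. simpl. apply Rmax_r.
 simpl. eapply Rle_trans. apply IHn. lia. apply Rmax_l. Qed.

Lemma GB_ratio (a : nat -> C) K (r : R) : (0 < r)%R ->
  (forall m, (K <= m)%nat -> Cmod (a (S m)) <= r * Cmod (a m))%R ->
  exists M, forall m, (Cmod (a m) <= M * r ^ m)%R.
Proof. intros Hr H.
 set (M := mx (fun i => Cmod (a i) / r ^ i)%R K).
 exists M.
 assert (Hle : forall m, (m <= K)%nat -> (Cmod (a m) <= M * r ^ m)%R).
 { intros m Hm. assert (Hp : (0 < r ^ m)%R) by (apply pow_lt; auto).
   pose proof (mx_ge (fun i => Cmod (a i) / r ^ i)%R K m Hm) as T. simpl in T. fold M in T.
   apply (Rmult_le_compat_r (r ^ m)) in T; [|lra].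
   unfold Rdiv in T. rewrite Rmult_assoc, Rinv_l in T by lra. lra. }
 intros m. destruct (le_lt_dec m K) as [Hm|Hm]. auto.
 replace m with (K + (m - K))%nat by lia. generalize (m - K)%nat. intros d.
 induction d. rewrite Nat.add_0_r. auto.
 rewrite Nat.add_succ_r. eapply Rle_trans. apply H. lia.
 simpl. pose proof (pow_lt r (K + d) Hr). nra. Qed.

Lemma ev_small (q d : R) : (0 < q < 1)%R -> (0 < d)%R -> exists K, forall m, (K <= m)%nat -> (q ^ m < d)%R.
Proof. intros Hq Hd. destruct (pow_lt_1_zero q ltac:(rewrite Rabs_pos_eq; lra) d Hd) as [K HK].
 exists K. intros m Hm. specialize (HK m Hm). rewrite Rabs_pos_eq in HK; auto. apply pow_le; lra. Qed.

Lemma Cmod_qpow (q : R) m : (0 <= q)%R -> Cmod (Cpow (RtoC q) m) = (q ^ m)%R.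
Proof. intros Hq. rewrite Cmod_pow, Cmod_R, Rabs_pos_eq; auto. Qed.

Definition GBL (a : nat -> C) (L : R) : Prop :=
  forall r, (L < r)%R -> exists M, forall m, (Cmod (a m) <= M * r ^ m)%R.

Lemma GBL_ext (a b : nat -> C) L : (forall m, a m = b m) -> GBL a L -> GBL b L.
Proof. intros E H r Hr. destruct (H r Hr) as [M HM]. exists M. intros m. rewrite <- E. auto. Qed.

Lemma GBL_weak (a : nat -> C) L L' : (L <= L')%R -> GBL a L -> GBL a L'.
Proof. intros E H r Hr. apply H. lra. Qed.

Lemma GBL_pow (z : C) : GBL (fun m => Cpow z m) (Cmod z).
Proof. intros r Hr. exists 1%R. intros m. rewrite Cmod_pow, Rmult_1_l.
 apply pow_incr. split. apply Cmod_ge_0. lra. Qed.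

Lemma GBL_mult (a b : nat -> C) L1 L2 : (0 <= L1)%R -> (0 <= L2)%R -> GBL a L1 -> GBL b L2 ->
  GBL (fun m => a m * b m) (L1 * L2).
Proof. intros H1 H2 Ha Hb r Hr.
 set (e := Rmin 1 ((r - L1 * L2) / (L1 + L2 + 1))).
 assert (He : (0 < e)%R). { unfold e. apply Rmin_pos. lra. apply Rdiv_lt_0_compat; lra. }
 assert (He1 : (e <= 1)%R) by apply Rmin_l.
 assert (He2 : (e * (L1 + L2 + 1) <= r - L1 * L2)%R).
 { assert (T : (e <= (r - L1 * L2) / (L1 + L2 + 1))%R) by apply Rmin_r.
   apply (Rmult_le_compat_r (L1 + L2 + 1)) in T; [|lra].
   unfold Rdiv in T. rewrite Rmult_assoc, Rinv_l in T; lra. }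
 destruct (Ha (L1 + e)%R ltac:(lra)) as [M1 HM1].
 destruct (Hb (L2 + e)%R ltac:(lra)) as [M2 HM2].
 assert (M1p : (0 <= M1)%R). { specialize (HM1 O). simpl in HM1. pose proof (Cmod_ge_0 (a O)). lra. }
 assert (M2p : (0 <= M2)%R). { specialize (HM2 O). simpl in HM2. pose proof (Cmod_ge_0 (b O)). lra. }
 exists (M1 * M2)%R. intros m. rewrite Cmod_mult.
 assert (Hprod : ((L1 + e) * (L2 + e) <= r)%R) by nra.
 apply Rle_trans with ((M1 * (L1 + e) ^ m) * (M2 * (L2 + e) ^ m))%R.
 apply Rmult_le_compat; auto using Cmod_ge_0.
 replace (M1 * (L1 + e) ^ m * (M2 * (L2 + e) ^ m))%R with (M1 * M2 * ((L1 + e) * (L2 + e)) ^ m)%R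
   by (rewrite Rpow_mult_distr; ring).
 apply Rmult_le_compat_l. nra. apply pow_incr. split; nra. Qed.

Lemma Cmod_1m (z : C) : (1 - Cmod z <= Cmod (1 - z))%R.
Proof. assert (T : (Cmod 1 <= Cmod (1 - z) + Cmod z)%R).
 { replace (RtoC 1) with ((1 - z) + z) at 1 by ring. apply Cmod_triangle. }
 rewrite Cmod_1 in T. lra. Qed.

Lemma Cmod_1p (z : C) : (Cmod (1 - z) <= 1 + Cmod z)%R.
Proof. unfold Cminus. eapply Rle_trans. apply Cmod_triangle. rewrite Cmod_opp, Cmod_1. lra. Qed.

Lemma GBL_qp (al : C) (q : R) : (0 < q < 1)%R -> GBL (fun m => qpoch al (RtoC q) m) 1.
Proof. intros Hq r Hr.
 destruct (ev_small q ((r - 1) / (Cmod al + 1))%R Hq) as [K HK].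
 { apply Rdiv_lt_0_compat. lra. pose proof (Cmod_ge_0 al). lra. }
 apply (GB_ratio _ K r). lra.
 intros m Hm. rewrite qp_S, Cmod_mult, Rmult_comm. apply Rmult_le_compat_r. apply Cmod_ge_0.
 eapply Rle_trans. apply Cmod_1p. rewrite Cmod_mult, Cmod_qpow by lra.
 specialize (HK m Hm). pose proof (Cmod_ge_0 al).
 apply (Rmult_lt_compat_l (Cmod al + 1)) in HK; [|lra].
 replace ((Cmod al + 1) * ((r - 1) / (Cmod al + 1)))%R with (r - 1)%R in HK by (field; lra).
 assert (0 <= q ^ m)%R by (apply pow_le; lra). nra. Qed.

Lemma Cinv_mult2 (x y : C) : x <> 0 -> y <> 0 -> / (x * y) = / x * / y.
Proof. intros; field; auto. Qed.

Lemma inv_lt1 (r : R) : (1 < r)%R -> (0 < / r < 1)%R.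
Proof. intros H. split. apply Rinv_0_lt_compat; lra.
 rewrite <- Rinv_1. apply Rinv_lt_contravar; lra. Qed.

Lemma GBL_qpinv (be : C) (q : R) : (0 < q < 1)%R -> (forall m, qpoch be (RtoC q) m <> 0) ->
  GBL (fun m => / qpoch be (RtoC q) m) 1.
Proof. intros Hq Hnz r Hr. pose proof (inv_lt1 r Hr) as Hir.
 destruct (ev_small q ((1 - / r) / (Cmod be + 1))%R Hq) as [K HK].
 { apply Rdiv_lt_0_compat. lra. pose proof (Cmod_ge_0 be). lra. }
 apply (GB_ratio _ K r). lra.
 intros m Hm. pose proof (Hnz (S m)) as H1. pose proof (Hnz m) as H0.
 assert (H2 := qp_last _ _ _ H1).
 rewrite qp_S, Cinv_mult2, Cmod_mult, Rmult_comm by auto.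
 apply Rmult_le_compat_r. apply Cmod_ge_0.
 rewrite Cmod_inv by auto.
 assert (T : (/ r <= Cmod (1 - be * RtoC q ^ m))%R).
 { eapply Rle_trans; [|apply Cmod_1m]. rewrite Cmod_mult, Cmod_qpow by lra.
   specialize (HK m Hm). pose proof (Cmod_ge_0 be).
   apply (Rmult_lt_compat_l (Cmod be + 1)) in HK; [|lra].
   replace ((Cmod be + 1) * ((1 - / r) / (Cmod be + 1)))%R with (1 - / r)%R in HK by (field; lra).
   assert (0 <= q ^ m)%R by (apply pow_le; lra). nra. }
 rewrite <- (Rinv_inv r). apply Rinv_le_contravar; lra. Qed.

Lemma sm_minus (a b : nat -> C) n : sm (fun k => a k - b k) n = sm a n - sm b n.
Proof. induction n; simpl. ring. rewrite IHn. ring. Qed.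

Lemma triangle (a : nat -> nat -> C) n :
  sm (fun m => sm (fun k => a k (m - k)%nat) (S m)) n = sm (fun k => sm (a k) (n - k)) n.
Proof. induction n. reflexivity.
 change (sm (fun m => sm (fun k => a k (m - k)%nat) (S m)) (S n))
   with (sm (fun m => sm (fun k => a k (m - k)%nat) (S m)) n + sm (fun k => a k (n - k)%nat) (S n)).
 rewrite IHn. change (sm (fun k => sm (a k) (S n - k)) (S n)) with
   (sm (fun k => sm (a k) (S n - k)) n + sm (a n) (S n - n)).
 rewrite (sm_ext (fun k => sm (a k) (S n - k)) (fun k => sm (a k) (n - k) + a k (n - k)%nat)).
 2:{ intros k Hk. rewrite Nat.sub_succ_l by lia. reflexivity. }
 rewrite sm_plus. replace (S n - n)%nat with 1%nat by lia. simpl. rewrite Nat.sub_diag. ring. Qed.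

Lemma regroup (a : nat -> nat -> C) (C0 al be : R) :
  (0 <= al < 1)%R -> (0 <= be < 1)%R ->
  (forall k j, Cmod (a k j) <= C0 * al ^ k * be ^ j)%R ->
  exists L, cv (fun m => sm (fun k => a k (m - k)%nat) (S m)) L /\ cv (fun k => csum (a k)) L.
Proof.
  intros Hal Hbe Hb.
  assert (HC0 : (0 <= C0)%R). { specialize (Hb O O). simpl in Hb. pose proof (Cmod_ge_0 (a O O)). lra. }
  assert (Hs : forall k, cv (a k) (csum (a k))).
  { intros k. destruct (ex_cv (a k) (fun j => (C0 * al ^ k) * be ^ j)%R) as [l Hl].
    intros j. apply Hb. apply ex_geo. lra.
    rewrite (cv_csum _ _ Hl). exact Hl. }
  set (cp := fun N => smR (fun k => al ^ k * be ^ (N - k))%R (S N)).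
  assert (Hcp0 : forall N, (0 <= cp N)%R).
  { intros N. apply smR_nonneg. intros k. apply Rmult_le_pos; apply pow_le; lra. }
  assert (Hcps : ex_series cp).
  { assert (Hm := is_series_mult (fun k => al ^ k)%R (fun k => be ^ k)%R _ _
       (is_series_geom al ltac:(rewrite Rabs_pos_eq; lra)) (is_series_geom be ltac:(rewrite Rabs_pos_eq; lra))).
    eexists. eapply is_series_ext; [|apply Hm].
    - intros n. unfold cp. rewrite sum_f_smR. reflexivity.
    - apply (ex_series_ext (fun n => al ^ n)%R). intros n. rewrite Rabs_pos_eq; auto. apply pow_le; lra.
      apply ex_series_geom. rewrite Rabs_pos_eq; lra.
    - apply (ex_series_ext (fun n => be ^ n)%R). intros n. rewrite Rabs_pos_eq; auto. apply pow_le; lra.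
      apply ex_series_geom. rewrite Rabs_pos_eq; lra. }
  assert (Hd : forall m, (Cmod (sm (fun k => a k (m - k)%nat) (S m)) <= C0 * cp m)%R).
  { intros m. eapply Rle_trans. apply Cmod_sm. unfold cp. rewrite <- smR_scal. apply smR_le.
    intros k _. eapply Rle_trans. apply Hb. lra. }
  destruct (ex_cv _ (fun m => C0 * cp m)%R Hd) as [L HL].
  { apply (ex_series_ext (fun m => scal C0 (cp m))). intros; reflexivity.
    apply (@ex_series_scal R_AbsRing R_NormedModule). exact Hcps. }
  exists L. split; auto.
  assert (Hlim := ex_series_lim_0 cp Hcps). apply is_lim_seq_spec in Hlim.
  intros eps He.
  destruct (HL (eps / 2)%R ltac:(lra)) as [N1 HN1].
  set (K := (C0 / (1 - be) + 1)%R).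
  assert (HK : (0 < K)%R). { unfold K. assert (0 <= C0 / (1 - be))%R. { apply Rdiv_le_0_compat; lra. } lra. }
  destruct (Hlim (mkposreal (eps / 2 / K)%R ltac:(apply Rdiv_lt_0_compat; lra))) as [N2 HN2].
  exists (Nat.max N1 N2). intros n Hn.
  specialize (HN1 n ltac:(lia)). specialize (HN2 n ltac:(lia)). simpl in HN2.
  rewrite Rminus_0_r, Rabs_pos_eq in HN2 by auto.
  rewrite triangle in HN1.
  assert (Hdiff : (Cmod (sm (fun k => csum (a k)) n - sm (fun k => sm (a k) (n - k)) n) <= C0 / (1 - be) * cp n)%R).
  { replace (sm (fun k => csum (a k)) n - sm (fun k => sm (a k) (n - k)) n)
      with (sm (fun k => csum (a k) - sm (a k) (n - k)) n).
    2:{ apply sm_minus. }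
    eapply Rle_trans. apply Cmod_sm.
    apply Rle_trans with (smR (fun k => C0 / (1 - be) * (al ^ k * be ^ (n - k)))%R n).
    - apply smR_le. intros k Hk.
      apply (cv_norm_le _ _ _ (cv_tail (a k) (csum (a k)) (n - k) (Hs k))).
      intros N. eapply Rle_trans. apply Cmod_sm.
      apply Rle_trans with (smR (fun j => C0 * al ^ k * be ^ (n - k) * be ^ j)%R N).
      + apply smR_le. intros j _. eapply Rle_trans. apply Hb. rewrite pow_add. lra.
      + rewrite smR_scal. pose proof (geo_sum be N Hbe).
        assert (0 <= C0 * al ^ k * be ^ (n - k))%R.
        { apply Rmult_le_pos. apply Rmult_le_pos; auto; apply pow_le; lra. apply pow_le; lra. }
        apply Rle_trans with (C0 * al ^ k * be ^ (n - k) * / (1 - be))%R.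
        apply Rmult_le_compat_l; auto. unfold Rdiv. lra.
    - rewrite smR_scal. apply Rmult_le_compat_l. apply Rdiv_le_0_compat; lra.
      unfold cp. simpl smR. assert (0 <= al ^ n * be ^ (n - n))%R by (apply Rmult_le_pos; apply pow_le; lra). lra. }
  replace (sm (fun k => csum (a k)) n - L) with
    ((sm (fun k => csum (a k)) n - sm (fun k => sm (a k) (n - k)) n) + (sm (fun k => sm (a k) (n - k)) n - L)) by ring.
  eapply Rle_lt_trans. apply Cmod_triangle.
  assert (C0 / (1 - be) * cp n <= K * cp n)%R. { apply Rmult_le_compat_r; auto. unfold K; lra. }
  assert (K * cp n < eps / 2)%R.
  { apply (Rmult_lt_compat_l K) in HN2; auto. replace (K * (eps / 2 / K))%R with (eps / 2)%R in HN2 by (field; lra). lra. }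
  lra.
Qed.

Lemma RtoC_q_nz (q : R) : (0 < q)%R -> RtoC q <> 0.
Proof. intros H E. apply (f_equal fst) in E. simpl in E. lra. Qed.

Lemma qpQ_nz (q : R) : (0 < q < 1)%R -> forall k, qpoch (RtoC q) (RtoC q) k <> 0.
Proof. intros Hq k. induction k. simpl. intro E. apply (f_equal fst) in E. simpl in E. lra.
 rewrite qp_S. apply Cmult_neq_0; auto.
 change (RtoC q * Cpow (RtoC q) k) with (Cpow (RtoC q) (S k)). rewrite <- RtoC_pow.
 intro E. apply (f_equal fst) in E. simpl in E.
 assert (q ^ S k < 1)%R. { apply pow_lt_1_compat. lra. lia. }
 simpl in H. lra. Qed.

Lemma pow_le1 (q : R) k : (0 <= q <= 1)%R -> (q ^ k <= 1)%R.
Proof. intros H. induction k; simpl. lra. assert (0 <= q ^ k)%R by (apply pow_le; lra). nra. Qed.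

Lemma GB_of_GBL (a : nat -> C) L r : GBL a L -> (L < r)%R -> exists M, forall m, (Cmod (a m) <= M * r ^ m)%R.
Proof. intros H Hr. apply H; auto. Qed.

Theorem theorem4 (q : R) (n : nat) (x y r f g v w u : C) :
  (0 < q < 1)%R ->
  y <> RtoC 0 ->
  x <> RtoC 0 ->
  qpoch y (RtoC q) n <> RtoC 0 ->
  (forall m, qpoch v (RtoC q) m <> RtoC 0) ->
  (forall m, qpoch w (RtoC q) m <> RtoC 0) ->
  (forall m, qpoch (x * (RtoC q / Cpow (RtoC q) n) / y) (RtoC q) m <> RtoC 0) ->
  (Cmod u < 1)%R ->
  (Cmod (u * RtoC q / y) < 1)%R ->
  csum_fin (fun k =>
      qpoch (/ Cpow (RtoC q) n) (RtoC q) k * qpoch x (RtoC q) k * Cpow (RtoC q) k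
      / (qpoch (RtoC q) (RtoC q) k * qpoch y (RtoC q) k)
      * phi32 r f g v w (RtoC q) (u * Cpow (RtoC q) k)) n
  =
  Cpow x n * qpoch (y / x) (RtoC q) n / qpoch y (RtoC q) n *
  csum (fun k => csum (fun j =>
      qpoch r (RtoC q) (k + j) * qpoch f (RtoC q) (k + j) * qpoch g (RtoC q) (k + j)
      / (qpoch (RtoC q) (RtoC q) j * qpoch v (RtoC q) (k + j) * qpoch w (RtoC q) (k + j))
      * (qpoch ((RtoC q / Cpow (RtoC q) n) / y) (RtoC q) k
         * qpoch (RtoC q * x / y) (RtoC q) k
         / (qpoch (x * (RtoC q / Cpow (RtoC q) n) / y) (RtoC q) k
            * qpoch (RtoC q) (RtoC q) k))
      * Cpow u (k + j) * Cpow (RtoC q / y) j)).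
Proof.
  intros Hq Hy Hx Hyn Hv Hw Hc Hu Huy.
  assert (HQ := RtoC_q_nz q ltac:(lra)).
  assert (HQQ := qpQ_nz q Hq).
  set (Q := RtoC q) in *.
  set (E := fun m => qpoch r Q m * qpoch f Q m * qpoch g Q m / (qpoch v Q m * qpoch w Q m) * Cpow u m).
  set (V := fun m => sm (fun i => Bk Q n x y i * Cpow (Q / y) (m - i) / qpoch Q Q (m - i)) (S m)).
  assert (GE : GBL E (Cmod u)).
  { assert (G : GBL (fun m => qpoch r Q m * qpoch f Q m * qpoch g Q m * / qpoch v Q m * / qpoch w Q m * Cpow u m)
                   (1 * 1 * 1 * 1 * 1 * Cmod u)).
    { repeat apply GBL_mult; try lra; try apply Cmod_ge_0;
        try apply GBL_qp; try apply GBL_qpinv; try apply GBL_pow; auto. }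
    replace (1 * 1 * 1 * 1 * 1 * Cmod u)%R with (Cmod u) in G by ring.
    eapply GBL_ext; [|exact G]. intros m. unfold E. field. split; auto. }
  assert (Hphi : forall k, cv (fun m => phi32_term r f g v w Q (u * Cpow Q k) m) (phi32 r f g v w Q (u * Cpow Q k))).
  { intros k.
    assert (G : GBL (fun m => E m * (Cpow (Cpow Q k) m * / qpoch Q Q m)) (Cmod u * (1 * 1))).
    { apply GBL_mult; try apply GBL_mult; try lra; try apply Cmod_ge_0; auto.
      apply (GBL_weak _ (Cmod (Cpow Q k))). unfold Q. rewrite Cmod_qpow by lra. apply pow_le1; lra.
      apply GBL_pow. apply GBL_qpinv; auto. }
    destruct (G ((1 + Cmod u) / 2)%R ltac:(lra)) as [M HM].
    destruct (ex_cv (fun m => phi32_term r f g v w Q (u * Cpow Q k) m) (fun m => M * ((1 + Cmod u) / 2) ^ m)%R) as [l Hl].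
    { intros m. eapply Rle_trans; [|apply HM]. right. f_equal.
      unfold phi32_term, E. rewrite Cpow_mult_l. field. repeat split; auto. }
    { apply ex_geo. pose proof (Cmod_ge_0 u). lra. }
    change (cv (fun m => phi32_term r f g v w Q (u * Cpow Q k) m) (csum (fun m => phi32_term r f g v w Q (u * Cpow Q k) m))).
    rewrite (cv_csum _ _ Hl). exact Hl. }
  assert (HL : cv (fun m => Pn Q x y n * (E m * V m))
                  (csum_fin (fun k => qpoch (/ Cpow Q n) Q k * qpoch x Q k * Cpow Q k
                     / (qpoch Q Q k * qpoch y Q k) * phi32 r f g v w Q (u * Cpow Q k)) n)).
  { rewrite csum_fin_sm.
    change (cv (fun m => Pn Q x y n * (E m * V m)) (sm (fun k => Tm Q n x y k * phi32 r f g v w Q (u * Cpow Q k)) (S n))).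
    eapply cv_ext; [|apply (cv_sm (fun k m => Tm Q n x y k * phi32_term r f g v w Q (u * Cpow Q k) m))].
    - intros m. cbv beta.
      rewrite (sm_ext _ (fun k => (E m / qpoch Q Q m) * (Tm Q n x y k * Cpow (Cpow Q k) m))).
      2:{ intros k _. unfold phi32_term, E. rewrite Cpow_mult_l. field. repeat split; auto. }
      rewrite sm_scal. unfold V.
      transitivity (E m * (sm (fun k => Tm Q n x y k * Cpow (Cpow Q k) m) (S n) / qpoch Q Q m)).
      { field. auto. }
      rewrite finite_id; auto. ring.
    - intros k _. apply cv_scal. apply Hphi. }
  set (a := fun k j : nat =>
      qpoch r Q (k + j) * qpoch f Q (k + j) * qpoch g Q (k + j)
      / (qpoch Q Q j * qpoch v Q (k + j) * qpoch w Q (k + j))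
      * (qpoch ((Q / Cpow Q n) / y) Q k * qpoch (Q * x / y) Q k
         / (qpoch (x * (Q / Cpow Q n) / y) Q k * qpoch Q Q k))
      * Cpow u (k + j) * Cpow (Q / y) j).
  change (csum_fin (fun k => qpoch (/ Cpow Q n) Q k * qpoch x Q k * Cpow Q k
                     / (qpoch Q Q k * qpoch y Q k) * phi32 r f g v w Q (u * Cpow Q k)) n
          = Pn Q x y n * csum (fun k => csum (a k))).
  assert (Ha : forall k j, a k j = E (k + j)%nat * Bk Q n x y k * (Cpow (Q / y) j * / qpoch Q Q j)).
  { intros k j. unfold a, E, Bk. field. repeat split; auto. }
  assert (GB : GBL (Bk Q n x y) 1).
  { assert (G : GBL (fun k => qpoch ((Q / Cpow Q n) / y) Q k * qpoch (Q * x / y) Q k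
                   * / qpoch (x * (Q / Cpow Q n) / y) Q k * / qpoch Q Q k) (1 * 1 * 1 * 1)).
    { repeat apply GBL_mult; try lra; try apply GBL_qp; try apply GBL_qpinv; auto. }
    replace (1 * 1 * 1 * 1)%R with 1%R in G by ring.
    eapply GBL_ext; [|exact G]. intros k. unfold Bk. field. split; auto. }
  assert (HQy : Q / y <> 0).
  { intro E0. apply HQ. replace Q with ((Q / y) * y) by (field; auto). rewrite E0. ring. }
  set (cy := Cmod (Q / y)).
  assert (Hcy : (0 < cy)%R) by (apply Cmod_gt_0; auto).
  assert (GF : GBL (fun j => Cpow (Q / y) j * / qpoch Q Q j) (cy * 1)).
  { apply GBL_mult; try lra. apply GBL_pow. apply GBL_qpinv; auto. }
  rewrite Rmult_1_r in GF.
  assert (Hucy : (Cmod u * cy < 1)%R).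
  { unfold cy. rewrite <- Cmod_mult. replace (u * (Q / y)) with (u * Q / y) by (unfold Cdiv; ring). exact Huy. }
  set (tau := Rmin 1 (/ cy)).
  assert (Hut : (Cmod u < tau)%R).
  { apply Rmin_glb_lt. auto. apply (Rmult_lt_reg_r cy); auto. rewrite Rinv_l; lra. }
  assert (Ht1 : (tau <= 1)%R) by apply Rmin_l.
  assert (Ht2 : (tau <= / cy)%R) by apply Rmin_r.
  pose proof (Cmod_ge_0 u) as Hu0.
  set (r1 := ((Cmod u + tau) / 2)%R).
  assert (Hr1 : (0 < r1 < 1)%R) by (unfold r1; lra).
  assert (Hr1c : (r1 * cy < 1)%R).
  { apply Rlt_le_trans with (tau * cy)%R. apply Rmult_lt_compat_r; auto. unfold r1; lra.
    apply Rle_trans with (/ cy * cy)%R. apply Rmult_le_compat_r; lra. rewrite Rinv_l; lra. }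
  assert (Hir1 : (1 < / r1)%R). { rewrite <- Rinv_1. apply Rinv_lt_contravar; lra. }
  assert (Hir1c : (cy < / r1)%R).
  { apply (Rmult_lt_reg_l r1). lra. rewrite Rinv_r by lra. lra. }
  set (r2 := ((1 + / r1) / 2)%R).
  set (r3 := ((cy + / r1) / 2)%R).
  destruct (GE r1 ltac:(unfold r1; lra)) as [M1 HM1].
  destruct (GB r2 ltac:(unfold r2; lra)) as [M2 HM2].
  destruct (GF r3 ltac:(unfold r3; lra)) as [M3 HM3].
  assert (Hal : (r1 * r2 = (r1 + 1) / 2)%R). { unfold r2. field. lra. }
  assert (Hbe : (r1 * r3 = (r1 * cy + 1) / 2)%R). { unfold r3. field. lra. }
  destruct (regroup a (M1 * M2 * M3) (r1 * r2) (r1 * r3)) as [L [HdL HsL]].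
  { rewrite Hal. lra. }
  { rewrite Hbe. assert (0 <= r1 * cy)%R by nra. lra. }
  { intros k j. rewrite Ha, Cmod_mult, Cmod_mult.
    apply Rle_trans with ((M1 * r1 ^ (k + j)) * (M2 * r2 ^ k) * (M3 * r3 ^ j))%R.
    - apply Rmult_le_compat. apply Rmult_le_pos; apply Cmod_ge_0. apply Cmod_ge_0.
      apply Rmult_le_compat; try apply Cmod_ge_0; auto. auto.
    - right. rewrite pow_add, !Rpow_mult_distr. ring. }
  rewrite (cv_csum _ _ HsL).
  assert (HdL' : cv (fun m => Pn Q x y n * (E m * V m)) (Pn Q x y n * L)).
  { apply cv_scal. eapply cv_ext; [|exact HdL]. intros m. unfold V.
    rewrite <- sm_scal. apply sm_ext. intros k Hk. rewrite Ha.
    replace (k + (m - k))%nat with m by lia. unfold Cdiv. ring. }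
  exact (cv_unique _ _ _ HL HdL').
Qed.
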